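(* Let $G$ be a finite, simple, undirected, connected graph with $n$ vertices and let $\ell$ be an integer with $2\leq\ell\leq n-1$. Then $\beta_\ell^s(G)=\ell+1$ if and only if $n=\ell+1$ or $G$ is isomorphic to the star $K_{1,\ell+1}$.
   Context: $d$ is the shortest-path distance; for nonempty $X\subseteq V(G)$, $d(s,X)=\min_{x\in X}d(s,x)$; for $S=\{s_1,\dots,s_k\}$, $\mathcal{D}_S(X)=(d(s_1,X),\dots,d(s_k,X))$. $S\subseteq V(G)$ is an $\ell$-solid-resolving set if $\mathcal{D}_S(X)\neq\mathcal{D}_S(Y)$ for all distinct nonempty $X,Y\subseteq V(G)$ with $|X|\leq\ell$ ($Y$ of arbitrary size). $\beta_\ell^s(G)$ is the minimum cardinality of an $\ell$-solid-resolving set of $G$. *)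

(* Defs.v *)
From mathcomp Require Import all_boot.
Set Implicit Arguments. Unset Strict Implicit. Unset Printing Implicit Defensive.

Section Graphs.
Variable T : finType.
Implicit Types (e : rel T).

Definition simple_graph e := symmetric e /\ irreflexive e.
Definition connected_graph e := forall x y : T, connect e x y.

Fixpoint walk e (k : nat) (x y : T) : bool :=
  match k with
  | 0 => x == y
  | k'.+1 => [exists z, e x z && walk e k' z y]
  end.

(* shortest-path distance; in a connected graph every distance is < #|T|,
   so the minimum over lengths k < #|T| is the true distance. *)
Definition dist e (x y : T) : nat :=
  \big[minn/#|T|]_(k < #|T| | walk e k x y) (k : nat).

Definition dist_set e (s : T) (X : {set T}) : nat :=
  \big[minn/#|T|]_(x in X) dist e s x.

(* S is an l-solid-resolving set: D_S(X) <> D_S(Y) for all distinct nonempty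
   X, Y with |X| <= l; the vectors differ iff some coordinate s in S differs. *)
Definition solid_resolving e (l : nat) (S : {set T}) : bool :=
  [forall X : {set T}, forall Y : {set T},
     [&& X != set0, Y != set0, X != Y & #|X| <= l] ==>
     [exists s in S, dist_set e s X != dist_set e s Y]].

(* beta_l^s(G): minimum cardinality of an l-solid-resolving set
   (the whole vertex set is always one, so the minimum exists). *)
Definition solid_metric_dim e (l : nat) : nat :=
  \big[minn/#|T|.+1]_(S : {set T} | solid_resolving e l S) #|S|.

End Graphs.

(* the star K_{1,m} on vertex set 'I_m.+1 with center ord0 *)
Definition star_rel (m : nat) : rel 'I_m.+1 :=
  fun x y => (x != y) && ((x == ord0) || (y == ord0)).

Definition isomorphic (T U : finType) (e : rel T) (f : rel U) : Prop :=
  exists g : T -> U, bijective g /\ forall x y, e x y = f (g x) (g y).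

(* Main.v *)
Require Import Defs.
From mathcomp Require Import all_boot zify.
Set Implicit Arguments. Unset Strict Implicit. Unset Printing Implicit Defensive.

Lemma bigmin_le_seq (I : eqType) (r : seq I) (P : pred I) (F : I -> nat) m i0 :
  i0 \in r -> P i0 -> \big[minn/m]_(i <- r | P i) F i <= F i0.
Proof.
elim: r => // a r IH; rewrite inE big_cons => /orP [/eqP <-|Hr] Hp.
  by rewrite Hp geq_minl.
case: ifP => _; last exact: IH.
by apply: leq_trans (geq_minr _ _) (IH Hr Hp).
Qed.

Lemma bigmin_le (I : finType) (P : pred I) (F : I -> nat) m i0 :
  P i0 -> \big[minn/m]_(i | P i) F i <= F i0.
Proof. by move=> Hp; apply: bigmin_le_seq => //; exact: mem_index_enum. Qed.

Lemma bigmin_ge (I : finType) (P : pred I) (F : I -> nat) m k :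
  k <= m -> (forall i, P i -> k <= F i) -> k <= \big[minn/m]_(i | P i) F i.
Proof.
move=> Hm HF; apply: (big_ind (fun x => k <= x)) => //.
by move=> x y Hx Hy; rewrite leq_min Hx Hy.
Qed.

Lemma bigmin_idx (I : finType) (P : pred I) (F : I -> nat) m :
  \big[minn/m]_(i | P i) F i <= m.
Proof.
apply: (big_rec (fun x => x <= m)) => // i x _ Hx.
by apply: leq_trans (geq_minr _ _) Hx.
Qed.

Section G.
Variables (T : finType) (e : rel T).

Lemma dist_refl x : dist e x x = 0.
Proof.
have H0 : 0 < #|T| by apply/card_gt0P; exists x.
apply/eqP; rewrite -leqn0.
exact: (@bigmin_le _ (fun k : 'I_#|T| => walk e k x x) (fun k => (k : nat)) #|T| (Ordinal H0) (eqxx x)).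
Qed.

Lemma dist_gt0 x y : x != y -> 0 < dist e x y.
Proof.
move=> Hxy; have H0 : 0 < #|T| by apply/card_gt0P; exists x.
apply: bigmin_ge => // -[[|k] Hk] //=.
by rewrite (negbTE Hxy).
Qed.

Lemma dist0 x y : dist e x y = 0 -> x = y.
Proof.
move=> H; apply/eqP; apply: contraTT isT => Hxy.
by have := dist_gt0 Hxy; rewrite H.
Qed.

Lemma dist_edge x y : 1 < #|T| -> e x y -> dist e x y <= 1.
Proof.
move=> H1 Hxy.
apply: (@bigmin_le _ (fun k : 'I_#|T| => walk e k x y) (fun k => (k : nat)) #|T| (Ordinal H1)).
by apply/existsP; exists y; rewrite Hxy eqxx.
Qed.

Lemma dist_ge2 x y : 1 < #|T| -> x != y -> ~~ e x y -> 2 <= dist e x y.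
Proof.
move=> H1 Hxy He; apply: bigmin_ge => // -[[|[|k]] Hk] //=.
  by rewrite (negbTE Hxy).
move=> /existsP [z /andP [Hz /eqP Ez]]; subst z.
by rewrite Hz in He.
Qed.

Lemma dist_set_mem s (X : {set T}) : s \in X -> dist_set e s X = 0.
Proof.
move=> Hs; apply/eqP; rewrite -leqn0 -(dist_refl s).
exact: (@bigmin_le _ _ (fun x => dist e s x)).
Qed.

Lemma dist_set_le s (X : {set T}) x : x \in X -> dist_set e s X <= dist e s x.
Proof. by move=> Hx; exact: (@bigmin_le _ _ (fun x => dist e s x)). Qed.

Lemma dist_set_ge s (X : {set T}) k : k <= #|T| -> (forall x, x \in X -> k <= dist e s x) ->
  k <= dist_set e s X.
Proof. by move=> Hk H; apply: bigmin_ge. Qed.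

Lemma dist_setU1 s v (X : {set T}) :
  dist_set e s (v |: X) = minn (dist e s v) (dist_set e s X).
Proof.
apply/eqP; rewrite eqn_leq; apply/andP; split.
  rewrite leq_min; apply/andP; split.
    by apply: dist_set_le; rewrite setU11.
  apply: dist_set_ge; first exact: bigmin_idx.
  by move=> x Hx; apply: dist_set_le; rewrite setU1r.
apply: dist_set_ge.
  exact: leq_trans (geq_minr _ _) (bigmin_idx _ _ _).
move=> x /setU1P [->|Hx]; first exact: geq_minl.
exact: leq_trans (geq_minr _ _) (dist_set_le _ Hx).
Qed.

Definition condA l (S : {set T}) := forall (X : {set T}) v, X != set0 -> #|X| <= l ->
  v \notin X -> exists2 s, s \in S & dist e s v < dist_set e s X.

Lemma res_condA l S : solid_resolving e l S -> condA l S.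
Proof.
move=> HS X v HX Hl Hv.
move: HS => /forallP /(_ X) /forallP /(_ (v |: X)).
have -> : [&& X != set0, v |: X != set0, X != v |: X & #|X| <= l].
  rewrite HX Hl /= andbT; apply/andP; split.
    by apply/set0Pn; exists v; rewrite setU11.
  by apply: contraNneq Hv => ->; rewrite setU11.
move=> /= /existsP [s /andP [Hs Hd]]; exists s => //.
rewrite dist_setU1 in Hd.
case: (leqP (dist_set e s X) (dist e s v)) => // Hle.
by move: Hd; rewrite (minn_idPr Hle) eqxx.
Qed.

Lemma condA_notin (S X : {set T}) v s : s \in S -> dist e s v < dist_set e s X -> s \notin X.
Proof. by move=> _ H; apply/negP => Hs; rewrite dist_set_mem in H. Qed.

Lemma condA_res l S : condA l S -> solid_resolving e l S.
Proof.
move=> HA; apply/forallP => X; apply/forallP => Y; apply/implyP.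
move=> /and4P [HX HY HXY Hl].
case: (boolP (Y \subset X)) => Hsub.
  have [x /andP [HxY HxX]] : exists x, (x \notin Y) && (x \in X).
    have : ~~ (X \subset Y).
      by apply: contra HXY => H; rewrite eqEsubset H Hsub.
    by case/subsetPn => x Hx Hy; exists x; rewrite Hx Hy.
  have HlY : #|Y| <= l by apply: leq_trans (subset_leq_card Hsub) Hl.
  have [s Hs Hd] := HA Y x HY HlY HxY.
  apply/existsP; exists s; rewrite Hs /=.
  by rewrite neq_ltn (leq_trans _ Hd) // ltnS dist_set_le.
case/subsetPn: Hsub => y HyY HyX.
have [s Hs Hd] := HA X y HX Hl HyX.
apply/existsP; exists s; rewrite Hs /=.
by rewrite neq_ltn (leq_trans _ Hd) ?orbT // ltnS dist_set_le.
Qed.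

End G.

Section G2.
Variables (T : finType) (e : rel T).

Lemma dim_le l S : solid_resolving e l S -> solid_metric_dim e l <= #|S|.
Proof. move=> H; exact: (@bigmin_le _ (fun S => solid_resolving e l S) (fun S => #|S|)). Qed.

Lemma dim_ge l k : (forall S, solid_resolving e l S -> k <= #|S|) -> k <= #|T|.+1 ->
  k <= solid_metric_dim e l.
Proof. by move=> H Hk; apply: bigmin_ge. Qed.

Lemma lower_bound l S : 2 <= l -> l < #|T| -> solid_resolving e l S -> l < #|S|.
Proof.
move=> Hl HT HS; rewrite ltnNge; apply/negP => HSl.
have HA := res_condA HS.
case: (set_0Vmem S) => [S0|[s0 Hs0]].
  have /card_gt0P [x0 _] : 0 < #|T| by lia.
  have [v Hv] : exists v, v \in [set~ x0].
    by apply/set0Pn; rewrite -card_gt0 cardsC1; lia.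
  have H1 : #|[set x0]| <= l by rewrite cards1; lia.
  have H2 : v \notin [set x0] by rewrite inE; rewrite !inE in Hv.
  have H0 : [set x0] != set0 by apply/set0Pn; exists x0; rewrite inE.
  have [s] := HA [set x0] v H0 H1 H2.
  by rewrite S0 inE.
have [v Hv] : exists v, v \notin S.
  apply/existsP; rewrite -negb_forall; apply/negP => /forallP H.
  have : #|T| <= #|S| by apply/subset_leq_card/subsetP => x _; exact: H.
  lia.
have HS0 : S != set0 by apply/set0Pn; exists s0.
have [s Hs] := HA S v HS0 HSl Hv.
by rewrite dist_set_mem.
Qed.

Lemma setT_res l : solid_resolving e l [set: T].
Proof.
apply: condA_res => X v HX Hl Hv; exists v; first by rewrite inE.
rewrite dist_refl; apply: dist_set_ge.
  by apply/card_gt0P; exists v.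
move=> x Hx; apply: dist_gt0; by apply: contraNneq Hv => ->.
Qed.

Lemma star_res l (c : T) : #|T| = l.+2 ->
  (forall x y, e x y = (x != y) && ((x == c) || (y == c))) ->
  solid_resolving e l [set~ c].
Proof.
move=> HT He; apply: condA_res => X v HX Hl Hv.
case: (eqVneq v c) => [Evc|Hvc].
  subst v.
  have [s Hs] : exists s, s \in [set~ c] :\: X.
    apply/set0Pn; rewrite -card_gt0.
    have := leq_card_setU ([set~ c] :\: X) X.
    have : [set~ c] \subset ([set~ c] :\: X) :|: X.
      by apply/subsetP => x Hx; rewrite !inE; case: (x \in X); rewrite ?orbT //; rewrite !inE in Hx; rewrite Hx.
    move/subset_leq_card; rewrite cardsC1 HT /= => H1 [H2 _]; lia.
  move: Hs; rewrite !inE => /andP [HsX Hsc].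
  exists s; first by rewrite !inE.
  apply: (@leq_trans 2).
    by apply: dist_edge; [rewrite HT | rewrite He Hsc eqxx orbT].
  apply: dist_set_ge; first by rewrite HT.
  move=> x Hx; apply: dist_ge2; first by rewrite HT.
    by apply: contraNneq HsX => ->.
  have Hxc : x != c by apply: contraNneq Hv => <-.
  by rewrite He (negbTE Hsc) (negbTE Hxc) andbF.
exists v; first by rewrite !inE.
rewrite dist_refl; apply: dist_set_ge.
  by apply/card_gt0P; exists v.
move=> x Hx; apply: dist_gt0; by apply: contraNneq Hv => ->.
Qed.

End G2.

Lemma three (a0 b0 a1 b1 a2 b2 : nat) : (a0<b0)||(a1<b1) -> (a0<b0)||(a2<b2) ->
  (a1<b1)||(a2<b2) -> (b0<a0)||(b1<a1) -> (b0<a0)||(b2<a2) -> (b1<a1)||(b2<a2) -> False.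
Proof.
by case: (ltngtP a0 b0); case: (ltngtP a1 b1); case: (ltngtP a2 b2).
Qed.

Section G3.
Variables (T : finType) (e : rel T).

Lemma nec l S : simple_graph e -> connected_graph e -> 2 <= l -> l.+2 <= #|T| ->
  solid_resolving e l S -> #|S| = l.+1 ->
  exists c, #|T| = l.+2 /\ forall x y, e x y = (x != y) && ((x == c) || (y == c)).
Proof.
move=> [Hsym Hirr] Hconn Hl HT HS HSc.
have HA := res_condA HS.
have Ha : forall s0 v, s0 \in S -> v \notin S -> dist e s0 v < dist_set e s0 (S :\ s0).
  move=> s0 v Hs0 Hv.
  have Hc : #|S :\ s0| = l by move: HSc; rewrite (cardsD1 s0) Hs0 => /eqP; rewrite eqSS => /eqP.
  have H0 : S :\ s0 != set0 by rewrite -card_gt0 Hc; lia.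
  have Hv' : v \notin S :\ s0 by rewrite !inE negb_and Hv orbT.
  have [s Hs Hd] := HA _ _ H0 (eq_leq Hc) Hv'.
  have := condA_notin Hs Hd; rewrite !inE Hs andbT negbK => /eqP Es; subst s.
  exact: Hd.
have Hb : forall s0 s1 v w, s0 \in S -> s1 \in S -> s0 != s1 -> v \notin S -> w \notin S ->
    v != w -> (dist e s0 v < dist e s0 w) || (dist e s1 v < dist e s1 w).
  move=> s0 s1 v w Hs0 Hs1 Hne Hv Hw Hvw.
  set X := w |: (S :\ s0 :\ s1).
  have Hc : #|S :\ s0 :\ s1| = l.-1.
    move: HSc; rewrite (cardsD1 s0) Hs0 (cardsD1 s1 (S :\ s0)) !inE Hs1 eq_sym Hne /=.
    lia.
  have HX0 : X != set0 by apply/set0Pn; exists w; rewrite setU11.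
  have HXl : #|X| <= l by rewrite cardsU1 Hc; case: (w \notin _); lia.
  have HvX : v \notin X by rewrite !inE negb_or Hvw /= !negb_and Hv !orbT.
  have [s Hs Hd] := HA _ _ HX0 HXl HvX.
  have := condA_notin Hs Hd; rewrite !inE negb_or !negb_and !negbK Hs !orbF => /andP [_ Hs01].
  have Hdw : dist e s v < dist e s w.
    by apply: leq_trans Hd _; apply: dist_set_le; rewrite setU11.
  by case/orP: Hs01 => /eqP <-; rewrite Hdw ?orbT.
have [s0 Hs0] : exists s0, s0 \in S by apply/set0Pn; rewrite -card_gt0 HSc.
have [s1 Hs1'] : exists s1, s1 \in S :\ s0.
  by apply/set0Pn; rewrite -card_gt0; move: HSc; rewrite (cardsD1 s0) Hs0; lia.
have [s2 Hs2'] : exists s2, s2 \in S :\ s0 :\ s1.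
  apply/set0Pn; rewrite -card_gt0; move: HSc; rewrite (cardsD1 s0) Hs0 (cardsD1 s1 (S :\ s0)) Hs1'; lia.
move: Hs1' Hs2'; rewrite !inE => /andP [H10 Hs1] /andP [H21 /andP [H20 Hs2]].
have Hc : forall v w, v \notin S -> w \notin S -> v = w.
  move=> v w Hv Hw; apply/eqP; apply: contraTT isT => Hvw.
  have H01 : s0 != s1 by rewrite eq_sym.
  have H02 : s0 != s2 by rewrite eq_sym.
  have H12 : s1 != s2 by rewrite eq_sym.
  have := Hb _ _ _ _ Hs0 Hs1 H01 Hv Hw Hvw.
  have := Hb _ _ _ _ Hs0 Hs2 H02 Hv Hw Hvw.
  have := Hb _ _ _ _ Hs1 Hs2 H12 Hv Hw Hvw.
  have Hwv : w != v by rewrite eq_sym.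
  have := Hb _ _ _ _ Hs0 Hs1 H01 Hw Hv Hwv.
  have := Hb _ _ _ _ Hs0 Hs2 H02 Hw Hv Hwv.
  have := Hb _ _ _ _ Hs1 Hs2 H12 Hw Hv Hwv.
  move=> h1 h2 h3 h4 h5 h6; exfalso; exact: (three h6 h5 h4 h3 h2 h1).
have [c Hc0] : exists c, c \notin S.
  apply/existsP; rewrite -negb_forall; apply/negP => /forallP H.
  have : #|T| <= #|S| by apply/subset_leq_card/subsetP => x _; exact: H.
  lia.
have HcT : #|T| = l.+2.
  have : ~: S \subset [set c] by apply/subsetP => x; rewrite !inE => Hx; rewrite (Hc _ _ Hx Hc0).
  move/subset_leq_card; rewrite cards1 => H1.
  have := cardsC S; lia.
exists c; split => //.
have Hind : forall x y, x \in S -> y \in S -> ~~ e x y.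
  move=> x y Hx Hy; apply/negP => Hxy.
  have Hne : x != y by apply: contraTneq Hxy => ->; rewrite Hirr.
  have := Ha x c Hx Hc0.
  have : dist_set e x (S :\ x) <= 1.
    apply: leq_trans (dist_edge _ Hxy); last by rewrite HcT.
    by apply: dist_set_le; rewrite !inE eq_sym Hne.
  move=> H1 H2.
  have /dist0 Exc : dist e x c = 0 by lia.
  by subst x; rewrite Hx in Hc0.
have HSc' : forall x, x \notin S -> x = c by move=> x Hx; exact: Hc.
have Hadj : forall s, s \in S -> e s c.
  move=> s Hs; have /connectP [p Hp Hl'] := Hconn s c.
  case: p Hp Hl' => [|z p] /=.
    by move=> _ Esc; subst s; rewrite Hs in Hc0.
  move=> /andP [Hsz _] _.
  case: (boolP (z \in S)) => Hz; first by have := Hind _ _ Hs Hz; rewrite Hsz.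
  by rewrite -(HSc' _ Hz).
move=> x y.
case: (boolP (x \in S)) => Hx; case: (boolP (y \in S)) => Hy.
- have -> : (x == c) = false by apply/negbTE; apply: contraNneq Hc0 => <-.
  have -> : (y == c) = false by apply/negbTE; apply: contraNneq Hc0 => <-.
  by rewrite andbF; apply/negbTE; apply: Hind.
- have Hxc : x != c by apply: contraNneq Hc0 => <-.
  by rewrite (HSc' _ Hy) Hadj // eqxx orbT andbT Hxc.
- have Hyc : c != y by apply: contraNneq Hc0 => ->.
  by rewrite (HSc' _ Hx) Hsym Hadj // eqxx /= Hyc.
- by rewrite (HSc' _ Hx) (HSc' _ Hy) Hirr eqxx.
Qed.

End G3.

Section G4.
Variables (T : finType) (e : rel T).

Lemma iso_star l : isomorphic e (@star_rel l.+1) ->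
  exists c, #|T| = l.+2 /\ forall x y, e x y = (x != y) && ((x == c) || (y == c)).
Proof.
move=> [g [Hg He]]; have [g' Hgg' Hg'g] := Hg.
exists (g' ord0); split; first by rewrite (bij_eq_card Hg) card_ord.
move=> x y; rewrite He /star_rel (bij_eq Hg).
have E : forall z, (g z == ord0) = (z == g' ord0).
  by move=> z; rewrite -{1}(Hg'g ord0) (bij_eq Hg).
by rewrite !E.
Qed.

Lemma star_iso l c : #|T| = l.+2 ->
  (forall x y, e x y = (x != y) && ((x == c) || (y == c))) ->
  isomorphic e (@star_rel l.+1).
Proof.
move=> HT He.
pose h x : 'I_l.+2 := cast_ord HT (enum_rank x).
have hinj : injective h by move=> x y /cast_ord_inj /enum_rank_inj.
pose g x := if x == c then ord0 else if h x == ord0 then h c else h x.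
have gc : g c = ord0 by rewrite /g eqxx.
have ginj : injective g.
  move=> x y; rewrite /g.
  case: (eqVneq x c) => [->|Hxc]; case: (eqVneq y c) => [->|Hyc] //.
  - case: ifP => [/eqP H|Hy] E.
      by have := hinj _ _ (etrans H E); move=> Ey; rewrite Ey eqxx in Hyc.
    by rewrite -E eqxx in Hy.
  - case: ifP => [/eqP H|Hx] E.
      by have := hinj _ _ (etrans H (esym E)) => Ex; rewrite Ex eqxx in Hxc.
    by rewrite E eqxx in Hx.
  - case: ifP => [/eqP Hx|Hx]; case: ifP => [/eqP Hy|Hy] E.
    + by apply: hinj; rewrite Hx Hy.
    + by have := hinj _ _ E => Ey; rewrite -Ey eqxx in Hyc.
    + by have := hinj _ _ E => Ex; rewrite Ex eqxx in Hxc.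
    + exact: hinj.
have gbij : bijective g by apply: (inj_card_bij ginj); rewrite card_ord HT.
exists g; split => // x y.
rewrite He /star_rel (inj_eq ginj) -gc !(inj_eq ginj).
by [].
Qed.

End G4.
Unset Implicit Arguments. Set Strict Implicit. Set Printing Implicit Defensive.

Theorem mainTheorem6 (T : finType) (e : rel T) (l : nat) :
  simple_graph e -> connected_graph e ->
  2 <= l -> l <= #|T| - 1 ->
  (solid_metric_dim e l = l.+1 <->
   (#|T| = l.+1 \/ isomorphic e (@star_rel l.+1))).
Proof.
move=> Hsg Hconn Hl HlT.
have HT : l < #|T| by lia.
have LB : l.+1 <= solid_metric_dim e l.
  apply: dim_ge; last by lia.
  by move=> S HS; exact: (lower_bound Hl HT HS).
split.
  move=> Hd.
  case: (boolP [exists S : {set T}, solid_resolving e l S && (#|S| == l.+1)]).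
    move=> /existsP [S /andP [HS /eqP HSc]].
    case: (eqVneq #|T| l.+1) => [->|HTn]; first by left.
    right.
    have HT2 : l.+2 <= #|T| by move: HTn HT; lia.
    have [c [HcT Hc]] := nec Hsg Hconn Hl HT2 HS HSc.
    exact: star_iso HcT Hc.
  move=> Hno; exfalso.
  have : l.+2 <= solid_metric_dim e l.
    apply: dim_ge; last by lia.
    move=> S HS; have := lower_bound Hl HT HS.
    rewrite leq_eqVlt => /orP [/eqP HSc|] //.
    by move: Hno; rewrite negb_exists => /forallP /(_ S); rewrite HS -HSc eqxx.
  lia.
move=> H; apply/eqP; rewrite eqn_leq LB andbT.
case: H => [HTc|Hiso].
  by rewrite -HTc -cardsT; apply: dim_le; apply: setT_res.
have [c [HcT Hc]] := iso_star Hiso.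
have -> : l.+1 = #|[set~ c]| by rewrite cardsC1 HcT.
by apply: dim_le; apply: star_res HcT Hc.
Qed.
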